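(* There is no $\Sigma_1$-theory and no $\Sigma_2$-theory $\mathcal{T}$ which, with respect to the entire set of its sorts, is simultaneously not stably infinite, not stably finite, convex, and has the finite model property.
   Context: $\Sigma_1$ is the empty signature with one sort $\sigma$, and $\Sigma_2$ is the empty signature with two sorts $\sigma,\sigma_2$ (empty: no function symbols, only equality predicates, interpreted as identity). A $\Sigma$-interpretation is a structure (nonempty domain $\sigma^{\mathcal{A}}$ per sort) plus values for variables; a $\Sigma$-theory $\mathcal{T}$ is the class of all $\Sigma$-interpretations satisfying some set of closed formulas (the $\mathcal{T}$-interpretations); $\models_{\mathcal{T}}\varphi$ means every $\mathcal{T}$-interpretation satisfies $\varphi$. Let $S$ be a set of sorts. Convex w.r.t. $S$: for every conjunction of literals $\phi$ and variables $u_1,v_1,\dots,u_n,v_n$ of sorts in $S$, if $\models_{\mathcal{T}}\phi\to\bigvee_{i=1}^n u_i=v_i$ then $\models_{\mathcal{T}}\phi\to u_i=v_i$ for some $i$. Stably infinite w.r.t. $S$: every $\mathcal{T}$-satisfiable quantifier-free formula is satisfied by a $\mathcal{T}$-interpretation $\mathcal{A}$ with $\sigma^{\mathcal{A}}$ infinite for every $\sigma\in S$. Finite model property w.r.t. $S$: every $\mathcal{T}$-satisfiable quantifier-free formula is satisfied by a $\mathcal{T}$-interpretation with $\sigma^{\mathcal{A}}$ finite for every $\sigma\in S$. Stably finite w.r.t. $S$: for every quantifier-free $\phi$ and $\mathcal{T}$-interpretation $\mathcal{A}$ satisfying $\phi$, some $\mathcal{T}$-interpretation $\mathcal{B}$ satisfies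 $\phi$ with $|\sigma^{\mathcal{B}}|$ finite and $|\sigma^{\mathcal{B}}|\le|\sigma^{\mathcal{A}}|$ for all $\sigma\in S$. *)

(* Defs.v *)
(* Many-sorted first-order logic over an EMPTY signature (only equality),
   with a finite set of sorts given by an eqType S.
   Sigma_1 : S := unit (one sort);  Sigma_2 : S := bool (two sorts). *)
From mathcomp Require Import all_boot.
From Stdlib Require Import List.
Set Implicit Arguments. Unset Strict Implicit. Unset Printing Implicit Defensive.

Section FOL.
Variable S : eqType.

(* Variables are pairs (sort, index); the only terms are variables. *)
Inductive form : Type :=
| FEq  : S -> nat -> nat -> form
| FFalse : form
| FNot : form -> form
| FAnd : form -> form -> form
| FOr  : form -> form -> form
| FImp : form -> form -> form
| FAll : S -> nat -> form -> form
| FEx  : S -> nat -> form -> form.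

Fixpoint free (s : S) (x : nat) (p : form) : Prop :=
  match p with
  | FEq t a b => t = s /\ (a = x \/ b = x)
  | FFalse => False
  | FNot q => free s x q
  | FAnd q r | FOr q r | FImp q r => free s x q \/ free s x r
  | FAll t y q | FEx t y q => free s x q /\ ~ (t = s /\ y = x)
  end.

Definition closed (p : form) : Prop := forall s x, ~ free s x p.

Fixpoint qfree (p : form) : Prop :=
  match p with
  | FEq _ _ _ | FFalse => True
  | FNot q => qfree q
  | FAnd q r | FOr q r | FImp q r => qfree q /\ qfree r
  | FAll _ _ _ | FEx _ _ _ => False
  end.

Definition literal (p : form) : Prop :=
  match p with
  | FEq _ _ _ => True
  | FNot (FEq _ _ _) => True
  | _ => False
  end.

Inductive conj_lits : form -> Prop :=
| CL_lit p : literal p -> conj_lits p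
| CL_and p q : conj_lits p -> conj_lits q -> conj_lits (FAnd p q).

Fixpoint bigor_eq (l : list (S * nat * nat)) : form :=
  match l with
  | nil => FFalse
  | (s, a, b) :: nil => FEq s a b
  | (s, a, b) :: l' => FOr (FEq s a b) (bigor_eq l')
  end.

Record structure : Type := Struct {
  dom : S -> Type;
  dom_inh : forall s, inhabited (dom s) }.

Definition valuation (A : structure) := forall s : S, nat -> dom A s.

Definition upd (A : structure) (v : valuation A) (s : S) (x : nat) (a : dom A s)
  : valuation A :=
  fun s' y =>
    match @eqP S s s' with
    | ReflectT e => if y == x then eq_rect s (dom A) a s' e else v s' y
    | ReflectF _ => v s' y
    end.

Fixpoint sat (A : structure) (v : valuation A) (p : form) : Prop :=
  match p with
  | FEq s a b => v s a = v s b
  | FFalse => False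
  | FNot q => ~ sat v q
  | FAnd q r => sat v q /\ sat v r
  | FOr q r => sat v q \/ sat v r
  | FImp q r => sat v q -> sat v r
  | FAll s x q => forall a : dom A s, sat (upd v x a) q
  | FEx s x q => exists a : dom A s, sat (upd v x a) q
  end.

(* A theory is given by a set Ax of closed formulas; its T-structures are
   the structures satisfying every axiom. *)
Definition axioms_closed (Ax : form -> Prop) : Prop :=
  forall p, Ax p -> closed p.

Definition is_model (Ax : form -> Prop) (A : structure) : Prop :=
  forall p, Ax p -> forall v : valuation A, sat v p.

Definition T_valid (Ax : form -> Prop) (p : form) : Prop :=
  forall A, is_model Ax A -> forall v : valuation A, sat v p.

Definition T_satisfiable (Ax : form -> Prop) (p : form) : Prop :=
  exists A, is_model Ax A /\ exists v : valuation A, sat v p.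

Definition finite_type (T : Type) : Prop := exists l : list T, forall x, In x l.

(* All notions below are w.r.t. the entire set of sorts S. *)
Definition convex (Ax : form -> Prop) : Prop :=
  forall (phi : form) (l : list (S * nat * nat)),
    conj_lits phi -> l <> nil ->
    T_valid Ax (FImp phi (bigor_eq l)) ->
    exists s a b, In (s, a, b) l /\ T_valid Ax (FImp phi (FEq s a b)).

Definition stably_infinite (Ax : form -> Prop) : Prop :=
  forall phi, qfree phi -> T_satisfiable Ax phi ->
    exists A, is_model Ax A /\ (exists v : valuation A, sat v phi) /\
      forall s, ~ finite_type (dom A s).

Definition finite_model_property (Ax : form -> Prop) : Prop :=
  forall phi, qfree phi -> T_satisfiable Ax phi ->
    exists A, is_model Ax A /\ (exists v : valuation A, sat v phi) /\
      forall s, finite_type (dom A s).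

(* |dom B s| <= |dom A s| : there is an injection dom B s -> dom A s *)
Definition stably_finite (Ax : form -> Prop) : Prop :=
  forall phi, qfree phi ->
  forall A, is_model Ax A -> forall v : valuation A, sat v phi ->
    exists B, is_model Ax B /\ (exists w : valuation B, sat w phi) /\
      forall s, finite_type (dom B s) /\
        exists f : dom B s -> dom A s, forall x y, f x = f y -> x = y.

Definition bad_theory (Ax : form -> Prop) : Prop :=
  axioms_closed Ax /\ ~ stably_infinite Ax /\ ~ stably_finite Ax /\
  convex Ax /\ finite_model_property Ax.

End FOL.

(* Main.v *)
Require Import Defs.
From mathcomp Require Import all_boot.
From mathcomp Require Import zify.
From Stdlib Require Import List Classical ClassicalEpsilon Lia.
Set Implicit Arguments. Unset Strict Implicit. Unset Printing Implicit Defensive.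

Definition largeT (T : Type) (n : nat) : Prop :=
  exists f : nat -> T, forall i j, (i < n)%N -> (j < n)%N -> f i = f j -> i = j.

Lemma largeT_le T n m : largeT T n -> (m <= n)%N -> largeT T m.
Proof. move=> [f Hf] mn; exists f => i j Hi Hj; apply: Hf; lia. Qed.

Lemma avoid T (l : list T) : largeT T (length l).+1 -> exists b, ~ In b l.
Proof.
move=> [f Hf]; apply: NNPP => H.
have Hin : forall b, In b l by move=> b; apply: NNPP => nb; apply: H; exists b.
have ND : NoDup (List.map f (List.seq 0 (length l).+1)).
  apply: NoDup_map_NoDup_ForallPairs; last exact: seq_NoDup.
  move=> a b /in_seq Ha /in_seq Hb; apply: Hf; lia.
have := NoDup_incl_length ND (fun b _ => Hin b).
rewrite length_map length_seq; lia.
Qed.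

Lemma inf_large T : ~ finite_type T -> forall n, largeT T n.
Proof.
move=> nf; elim=> [|n [f Hf]].
  have [t _] : exists t : T, True.
    apply: NNPP => h; apply: nf; exists nil => t; apply: h; by exists t.
  by exists (fun _ => t).
have [t nt] : exists t, ~ In t (List.map f (List.seq 0 n)).
  apply: NNPP => h; apply: nf; exists (List.map f (List.seq 0 n)) => t.
  apply: NNPP => nt; apply: h; by exists t.
exists (fun i => if i == n then t else f i) => i j Hi Hj.
case: (eqVneq i n) => [->|ni]; case: (eqVneq j n) => [->|nj] //.
- move=> e; exfalso; apply: nt; rewrite e; apply/in_map_iff; exists j; split => //.
  apply/in_seq; move/eqP: nj => nj; lia.
- move=> e; exfalso; apply: nt; rewrite -e; apply/in_map_iff; exists i; split => //.
  apply/in_seq; move/eqP: ni => ni; lia.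
- move=> e; apply: Hf => //; [move/eqP: ni|move/eqP: nj] => *; lia.
Qed.

Fixpoint pos {T} (P : T -> Prop) (l : list T) : nat :=
  match l with
  | nil => 0
  | y :: l' => if excluded_middle_informative (P y) then 0 else (pos P l').+1
  end.

Lemma pos_lt T (P : T -> Prop) l : (exists z, In z l /\ P z) -> (pos P l < length l)%N.
Proof.
elim: l => [|y l IH] [z [Hz Pz]] //=.
case: excluded_middle_informative => // ny.
case: Hz => [e|Hz]; first by subst.
have := IH (ex_intro _ z (conj Hz Pz)); rewrite /=; lia.
Qed.

Lemma pos_eq T U (f : T -> U) (l : list T) x y :
  (exists z, In z l /\ f z = f x) -> (exists z, In z l /\ f z = f y) ->
  (pos (fun t => f t = f x) l = pos (fun t => f t = f y) l <-> f x = f y).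
Proof.
elim: l => [|z l IH] [z1 [H1 e1]] [z2 [H2 e2]] //=.
do 2 case: excluded_middle_informative => /=.
- move=> a b; split => // _; congruence.
- move=> a b; split => // e; exfalso; apply: a; congruence.
- move=> a b; split => // e; exfalso; apply: b; congruence.
- move=> a b; rewrite -IH; first by split => [[]|->].
  + case: H1 => [ez|H1]; first by subst.
    by exists z1.
  + case: H2 => [ez|H2]; first by subst.
    by exists z2.
Qed.

Lemma fin_inf_inj T U : finite_type T -> ~ finite_type U ->
  exists g : T -> U, forall x y, g x = g y -> x = y.
Proof.
move=> [l Hl] nU; have [f Hf] := inf_large nU (length l).
exists (fun b => f (pos (fun t => id t = id b) l)) => x y e.
have lx : (pos (fun t => id t = id x) l < length l)%N by apply: pos_lt; exists x.
have ly : (pos (fun t => id t = id y) l < length l)%N by apply: pos_lt; exists y.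
move: (Hf _ _ lx ly e) => h.
exact: (proj1 (pos_eq (f:=id) (ex_intro _ x (conj (Hl x) erefl)) (ex_intro _ y (conj (Hl y) erefl))) h).
Qed.

Lemma nat_inf : ~ finite_type nat.
Proof.
move=> [l Hl].
have H := proj1 (list_max_le l (list_max l)) (le_n _).
have := proj1 (Forall_forall _ _) H _ (Hl (list_max l).+1); lia.
Qed.

Section Gen.
Variable S : eqType.
Implicit Types (A B C : structure S) (p q r : form S).

Definition large (A : structure S) (s : S) (n : nat) := largeT (dom A s) n.

Lemma upd_same A (v : valuation A) s x (a : dom A s) y :
  upd v x a s y = if y == x then a else v s y.
Proof.
rewrite /upd; case: (@eqP S s s) => [e|ne]; last by case: ne.
by rewrite (eq_irrelevance e erefl).
Qed.

Lemma upd_other A (v : valuation A) s x (a : dom A s) s' y :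
  s' <> s -> upd v x a s' y = v s' y.
Proof.
move=> ne; rewrite /upd; case: (@eqP S s s') => [e|//].
by case: ne.
Qed.

Definition Iso A B (L : list (S * nat)) (v : valuation A) (w : valuation B) : Prop :=
  forall s x y, In (s, x) L -> In (s, y) L -> (v s x = v s y <-> w s x = w s y).

Lemma Iso_sym A B L (v : valuation A) (w : valuation B) : Iso L v w -> Iso L w v.
Proof. move=> H s x y H1 H2; by rewrite (H s x y H1 H2). Qed.

Lemma step A B L (v : valuation A) (w : valuation B) s x (a : dom A s) :
  Iso L v w -> large B s (length L).+1 ->
  exists b : dom B s, Iso ((s,x)::L) (upd v x a) (upd w x b).
Proof.
move=> HI HB.
suff [b K] : exists b, forall y, In (s,y) L -> (v s y = a <-> w s y = b).
  exists b => s1 x1 x2 H1 H2.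
  case: (eqVneq s1 s) => [e|ne].
  - subst s1; rewrite !upd_same.
    have G : forall z, In (s,z) ((s,x)::L) -> z != x -> In (s,z) L.
      move=> z [e|//] nz; case: e => ez; by rewrite ez eqxx in nz.
    case: (eqVneq x1 x) => [e1|n1]; case: (eqVneq x2 x) => [e2|n2];
      rewrite ?e1 ?e2 ?eqxx ?(negbTE n1) ?(negbTE n2) //.
    + have := K x2 (G _ H2 n2); split => h; symmetry; apply/H; done.
    + have := K x1 (G _ H1 n1); split => h; apply/H; done.
    + exact: HI (G _ H1 n1) (G _ H2 n2).
  - have ne' : s1 <> s by apply/eqP.
    rewrite !upd_other //.
    have G : forall z, In (s1,z) ((s,x)::L) -> In (s1,z) L.
      move=> z [e|//]; case: e => e; by case: ne'.
    exact: HI (G _ H1) (G _ H2).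
case: (classic (exists y, In (s,y) L /\ v s y = a)) => [[y0 [Hy0 e]]|none].
  exists (w s y0) => y Hy; rewrite -e; exact: HI.
have [b nb] := @avoid _ (List.map (w s) (List.map snd L)) ltac:(by rewrite !length_map).
exists b => y Hy; split => h; exfalso.
- by apply: none; exists y.
- apply: nb; rewrite -h; apply/in_map_iff; exists y; split => //.
  apply/in_map_iff; by exists (s,y).
Qed.

Fixpoint qd (p : form S) : nat :=
  match p with
  | FEq _ _ _ | FFalse => 0
  | FNot q => qd q
  | FAnd q r | FOr q r | FImp q r => qd q + qd r
  | FAll _ _ q | FEx _ _ q => (qd q).+1
  end.

Lemma free_bind t y q L :
  (forall s x, free s x (FAll t y q) -> In (s,x) L) ->
  forall s x, free s x q -> In (s,x) ((t,y)::L).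
Proof.
move=> Hf s x h; case: (classic (t = s /\ y = x)) => [[<- <-]|n]; first by left.
right; apply: Hf; by split.
Qed.

Lemma EF A B p : forall L (v : valuation A) (w : valuation B),
  (forall s x, free s x p -> In (s,x) L) -> Iso L v w ->
  (forall s, large A s (length L + qd p)) -> (forall s, large B s (length L + qd p)) ->
  (sat v p <-> sat w p).
Proof.
elim: p => [s a b | | q IH | q IHq r IHr | q IHq r IHr | q IHq r IHr | t y q IH | t y q IH]
  L v w Hf HI HA HB /=.
- apply: HI; apply: Hf => /=; auto.
- tauto.
- by rewrite (IH L v w).
- have l1 : (length L + qd q <= length L + (qd q + qd r))%N by lia.
  have l2 : (length L + qd r <= length L + (qd q + qd r))%N by lia.
  by rewrite (IHq L v w (fun s x h => Hf s x (or_introl h)) HI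
    (fun s => largeT_le (HA s) l1) (fun s => largeT_le (HB s) l1))
    (IHr L v w (fun s x h => Hf s x (or_intror h)) HI
    (fun s => largeT_le (HA s) l2) (fun s => largeT_le (HB s) l2)).
- have l1 : (length L + qd q <= length L + (qd q + qd r))%N by lia.
  have l2 : (length L + qd r <= length L + (qd q + qd r))%N by lia.
  by rewrite (IHq L v w (fun s x h => Hf s x (or_introl h)) HI
    (fun s => largeT_le (HA s) l1) (fun s => largeT_le (HB s) l1))
    (IHr L v w (fun s x h => Hf s x (or_intror h)) HI
    (fun s => largeT_le (HA s) l2) (fun s => largeT_le (HB s) l2)).
- have l1 : (length L + qd q <= length L + (qd q + qd r))%N by lia.
  have l2 : (length L + qd r <= length L + (qd q + qd r))%N by lia.
  by rewrite (IHq L v w (fun s x h => Hf s x (or_introl h)) HI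
    (fun s => largeT_le (HA s) l1) (fun s => largeT_le (HB s) l1))
    (IHr L v w (fun s x h => Hf s x (or_intror h)) HI
    (fun s => largeT_le (HA s) l2) (fun s => largeT_le (HB s) l2)).
- have Hf' := free_bind Hf.
  have HA' : forall s, large A s (length ((t,y)::L) + qd q).
    by move=> s; apply: largeT_le; [apply: HA|rewrite /=; lia].
  have HB' : forall s, large B s (length ((t,y)::L) + qd q).
    by move=> s; apply: largeT_le; [apply: HB|rewrite /=; lia].
  have lt1 : ((length L).+1 <= length L + (qd q).+1)%N by lia.
  split => H b.
  + have [a Ha] := step y b (Iso_sym HI) (largeT_le (HA t) lt1).
    exact: (proj1 (IH _ _ _ Hf' (Iso_sym Ha) HA' HB')) (H a).
  + have [a Ha] := step y b HI (largeT_le (HB t) lt1).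
    exact: (proj2 (IH _ _ _ Hf' Ha HA' HB')) (H a).
- have Hf' : forall s x, free s x q -> In (s,x) ((t,y)::L).
    move=> s x h; case: (classic (t = s /\ y = x)) => [[<- <-]|n]; first by left.
    right; apply: Hf; by split.
  have HA' : forall s, large A s (length ((t,y)::L) + qd q).
    by move=> s; apply: largeT_le; [apply: HA|rewrite /=; lia].
  have HB' : forall s, large B s (length ((t,y)::L) + qd q).
    by move=> s; apply: largeT_le; [apply: HB|rewrite /=; lia].
  have lt1 : ((length L).+1 <= length L + (qd q).+1)%N by lia.
  split => [[b H]|[b H]].
  + have [a Ha] := step y b HI (largeT_le (HB t) lt1).
    exists a; exact: (proj1 (IH _ _ _ Hf' Ha HA' HB')) H.
  + have [a Ha] := step y b (Iso_sym HI) (largeT_le (HA t) lt1).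
    exists a; exact: (proj2 (IH _ _ _ Hf' (Iso_sym Ha) HA' HB')) H.
Qed.

Lemma qf_transfer A B p L (v : valuation A) (w : valuation B) : qfree p ->
  (forall s x, free s x p -> In (s,x) L) -> Iso L v w -> (sat v p <-> sat w p).
Proof.
move=> + + HI.
elim: p => [s a b | | q IH | q IHq r IHr | q IHq r IHr | q IHq r IHr | t y q IH | t y q IH]
  //= qf Hf.
- apply: HI; apply: Hf => /=; auto.
- by rewrite IH.
- case: qf => q1 q2.
  by rewrite IHq ?IHr // => s x h; apply: Hf; auto.
- case: qf => q1 q2.
  by rewrite IHq ?IHr // => s x h; apply: Hf; auto.
- case: qf => q1 q2.
  by rewrite IHq ?IHr // => s x h; apply: Hf; auto.
Qed.

Fixpoint vars p : list (S * nat) :=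
  match p with
  | FEq s a b => (s,a)::(s,b)::nil
  | FFalse => nil
  | FNot q => vars q
  | FAnd q r | FOr q r | FImp q r => vars q ++ vars r
  | FAll _ _ q | FEx _ _ q => vars q
  end.

Lemma free_vars p s x : free s x p -> In (s,x) (vars p).
Proof.
elim: p => [t a b | | q IH | q IHq r IHr | q IHq r IHr | q IHq r IHr | t y q IH | t y q IH] /=.
- by move=> [-> [->|->]]; auto.
- by [].
- exact: IH.
- by move=> [h|h]; apply: in_or_app; auto.
- by move=> [h|h]; apply: in_or_app; auto.
- by move=> [h|h]; apply: in_or_app; auto.
- by move=> [h _]; auto.
- by move=> [h _]; auto.
Qed.

Lemma sort_choice A (P : forall s, (nat -> dom A s) -> Prop) :
  (forall s, exists f, P s f) -> exists F : valuation A, forall s, P s (F s).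
Proof.
move=> H.
exists (fun s => proj1_sig (constructive_indefinite_description _ (H s))) => s.
exact: proj2_sig (constructive_indefinite_description _ (H s)).
Qed.

Lemma exists_val A : exists v : valuation A, True.
Proof.
have [F _] := @sort_choice A (fun _ _ => True) (fun s => match dom_inh A s with
  inhabits d => ex_intro _ (fun _ => d) I end).
by exists F.
Qed.

Definition NatS : structure S := @Struct S (fun _ => nat) (fun _ => inhabits 0).

Lemma final (Ax : form S -> Prop) : axioms_closed Ax -> ~ stably_infinite Ax ->
  (forall N, exists C, is_model Ax C /\ forall s, large C s N) -> False.
Proof.
move=> Hc nSI Hlarge; apply: nSI => phi qf [A0 [mA0 [v0 sv0]]].
exists NatS; split; [|split].
- move=> p Hp w.
  have [C [mC HC]] := Hlarge (qd p).
  have [vC _] := exists_val C.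
  apply: (proj1 (@EF C NatS p nil vC w _ _ _ _)) (mC p Hp vC).
  + move=> s x h; exfalso; exact: Hc p Hp s x h.
  + by move=> s x y [].
  + exact: HC.
  + by move=> s; exists (fun i => i).
- pose w0 : valuation NatS := fun s x =>
    pos (fun t => v0 s t = v0 s x) (List.map snd (vars phi)).
  exists w0.
  apply: (proj1 (@qf_transfer A0 NatS phi (vars phi) v0 w0 qf _ _)) sv0.
    exact: free_vars.
  move=> s x y Hx Hy; rewrite /w0.
  have Ix : In x (List.map snd (vars phi)) by apply/in_map_iff; exists (s,x).
  have Iy : In y (List.map snd (vars phi)) by apply/in_map_iff; exists (s,y).
  rewrite (pos_eq (f := v0 s) (ex_intro _ x (conj Ix erefl)) (ex_intro _ y (conj Iy erefl))).
  by [].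
- move=> s; exact: nat_inf.
Qed.

Lemma sat_bigor A (v : valuation A) l :
  sat v (bigor_eq l) <-> exists t a b, In (t,a,b) l /\ v t a = v t b.
Proof.
elim: l => [|[[t a] b] l IH].
  by split => //= [[t [a [b [[] _]]]]].
case: l IH => [|q l] IH.
  split => /= [h|[t' [a' [b' [[e|[]] h]]]]]; first by exists t, a, b; auto.
  by move: h; case: e => <- <- <-.
rewrite [sat _ _]/= IH; split.
- move=> [h|[t' [a' [b' [H h]]]]]; first by exists t, a, b; split; [left|].
  by exists t', a', b'; split; [right|].
- move=> [t' [a' [b' [[e|H] h]]]]; first by left; move: h; case: e => <- <- <-.
  by right; exists t', a', b'.
Qed.

End Gen.

Lemma bool_other (s s' : bool) : s' != s -> s' = ~~ s.
Proof. by case: s; case: s'. Qed.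

Lemma nss (s : bool) : (~~ s == s) = false. Proof. by case: s. Qed.

Section Bool.
Implicit Types (A B C : structure bool).

Fixpoint conj_of (l : list (form bool)) : form bool :=
  match l with nil => FEq true 0 0 | p :: l' => FAnd p (conj_of l') end.

Lemma conj_of_lits l : (forall p, In p l -> literal p) -> conj_lits (conj_of l).
Proof.
elim: l => [|p l IH] H /=; first by apply: CL_lit.
apply: CL_and; [apply: CL_lit; apply: H; left | apply: IH => q hq; apply: H; right] => //.
Qed.

Lemma lit_qfree (p : form bool) : literal p -> qfree p.
Proof. by case: p => // -[]. Qed.

Lemma conj_of_qfree l : (forall p, In p l -> literal p) -> qfree (conj_of l).
Proof.
elim: l => [|p l IH] H //=; split; first by apply: lit_qfree; apply: H; left.
by apply: IH => q hq; apply: H; right.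
Qed.

Lemma sat_conj_of A (v : valuation A) l : sat v (conj_of l) <-> forall p, In p l -> sat v p.
Proof.
elim: l => [|p l IH] /=; first by split => // _ p [].
rewrite IH; split => [[h1 h2] q [<-|hq]|h]; auto.
Qed.

Definition D (s : bool) (b n : nat) : list (form bool) :=
  flat_map (fun i => List.map (fun j => if i == j then FEq s 0 0 else FNot (FEq s i j))
     (List.seq b n)) (List.seq b n).

Lemma D_lits s b n p : In p (D s b n) -> literal p.
Proof.
move/in_flat_map => [i [_ /in_map_iff [j [<- _]]]].
by case: (i == j).
Qed.

Lemma sat_D A (v : valuation A) s b n :
  (forall p, In p (D s b n) -> sat v p) <->
  (forall i j, (b <= i < b + n)%N -> (b <= j < b + n)%N -> v s i = v s j -> i = j).
Proof.
split.
- move=> H i j Hi Hj e; apply: NNPP => nij.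
  have : In (FNot (FEq s i j)) (D s b n).
    apply/in_flat_map; exists i; split; first by apply/in_seq; lia.
    apply/in_map_iff; exists j; split; last by apply/in_seq; lia.
    by rewrite ifF //; apply/eqP.
  by move/H => /=; apply.
- move=> H p /in_flat_map [i [/in_seq Hi /in_map_iff [j [<- /in_seq Hj]]]].
  case: (eqVneq i j) => [_|nij] //= e.
  move/eqP: nij; apply; apply: H => //; lia.
Qed.

Lemma conv_step (Ax : form bool -> Prop) s N k : convex Ax -> (2 <= k)%N ->
  (exists C, is_model Ax C /\ large C (~~ s) N /\ large C s k) ->
  exists C, is_model Ax C /\ large C (~~ s) N /\ large C s k.+1.
Proof.
move=> cv k2 [C [mC [HCo HCs]]]; apply: NNPP => nope.
pose phi := conj_of (D (~~ s) 0 N ++ D s 0 k).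
pose l := List.map (fun i => (s, N + k, i)) (List.seq 0 k).
have lits : conj_lits phi.
  by apply: conj_of_lits => p hp; case: (in_app_or _ _ _ hp) => h; apply: (D_lits h).
have lnil : l <> nil by rewrite /l; move: k2; case: (k) => [|k'].
have valid : T_valid Ax (FImp phi (bigor_eq l)).
  move=> D' mD u H; have su := proj1 (sat_conj_of u _) H.
  have suo : forall p, In p (D (~~ s) 0 N) -> sat u p.
    by move=> p h; apply: su; apply: in_or_app; left.
  have sus : forall p, In p (D s 0 k) -> sat u p.
    by move=> p h; apply: su; apply: in_or_app; right.
  move/sat_D: suo => suo; move/sat_D: sus => sus.
  apply/sat_bigor.
  case: (classic (exists i, (i < k)%N /\ u s (N + k) = u s i)) => [[i [ik e]]|none].
    exists s, (N + k), i; split => //; apply/in_map_iff; exists i; split => //.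
    apply/in_seq; lia.
  exfalso; apply: nope; exists D'; split => //; split.
    by exists (u (~~ s)) => i j hi hj; apply: suo; lia.
  exists (fun i => if i == k then u s (N + k) else u s i) => i j hi hj.
  case: (eqVneq i k) => [ei|ni]; case: (eqVneq j k) => [ej|nj] /=.
  - by rewrite ei ej.
  - move=> e; exfalso; apply: none; exists j; split => //; move/eqP: nj => nj; lia.
  - move=> e; exfalso; apply: none; exists i; split; last by rewrite e.
    move/eqP: ni => ni; lia.
  - apply: sus; move/eqP: ni; move/eqP: nj; lia.
have [s' [a [b [Hin Hv]]]] := cv phi l lits lnil valid.
move/in_map_iff: Hin => [i [e /in_seq ik]]; case: e => es ea eb; subst s' a b.
pose P := fun s' (f : nat -> dom C s') => forall i j, (i < (if s' == s then k else N))%N ->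
  (j < (if s' == s then k else N))%N -> f i = f j -> i = j.
have Hex : forall s', exists f, P s' f.
  move=> s'; case: (eqVneq s' s) => [->|ns]; first by rewrite /P eqxx; exact: HCs.
  rewrite /P (negbTE ns) (bool_other ns); exact: HCo.
have [F HF] := sort_choice Hex.
have HFo := HF (~~ s); have HFs := HF s.
rewrite /P eqxx in HFs.
rewrite /P nss in HFo.
pose j0 := if i == 0 then 1 else 0.
pose u : valuation C := fun s' n => F s' (if n == N + k then j0 else n).
have su : sat u phi.
  apply/sat_conj_of => p hp; case: (in_app_or _ _ _ hp) => {hp}; move: p; apply/sat_D => i' j' hi hj.
  - rewrite /u (_ : (i' == N + k) = false); last by apply/eqP; lia.
    rewrite (_ : (j' == N + k) = false); last by apply/eqP; lia.
    by move=> e; apply: (HFo i' j') => //; lia.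
  - rewrite /u (_ : (i' == N + k) = false); last by apply/eqP; lia.
    rewrite (_ : (j' == N + k) = false); last by apply/eqP; lia.
    by move=> e; apply: (HFs i' j') => //; lia.
have := Hv C mC u su; rewrite /= /u eqxx (_ : (i == N + k) = false); last by apply/eqP; lia.
move=> e; have := HFs j0 i _ _ e; rewrite /j0.
case: (eqVneq i 0) => [->|ni] /= H; first by have := H ltac:(lia) ltac:(lia).
have := H ltac:(lia) ltac:(lia); move/eqP: ni; lia.
Qed.

Lemma base2 (Ax : form bool -> Prop) s phi1 A1 (v1 : valuation A1) :
  qfree phi1 -> is_model Ax A1 -> sat v1 phi1 -> finite_type (dom A1 s) ->
  ~ finite_type (dom A1 (~~ s)) -> finite_model_property Ax ->
  ~ (exists B, is_model Ax B /\ (exists w : valuation B, sat w phi1) /\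
      forall s, finite_type (dom B s) /\
        exists f : dom B s -> dom A1 s, forall x y, f x = f y -> x = y) ->
  forall N, exists C, is_model Ax C /\ large C (~~ s) N /\ large C s 2.
Proof.
move=> qf mA1 sv1 finA infA fmp noB N.
pose m := (list_max (List.map snd (vars phi1))).+1.
have Hm : forall s' x, In (s', x) (vars phi1) -> (x < m)%N.
  move=> s' x h.
  have hx : In x (List.map snd (vars phi1)) by apply/in_map_iff; exists (s',x).
  have H := proj1 (list_max_le _ (list_max (List.map snd (vars phi1)))) (le_n _).
  have := proj1 (Forall_forall _ _) H _ hx; rewrite /m; lia.
pose psi := FAnd phi1 (conj_of (D (~~ s) m N)).
pose P := fun s' (f : nat -> dom A1 s') => s' = ~~ s ->
  forall i j, (i < N)%N -> (j < N)%N -> f i = f j -> i = j.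
have Hex : forall s', exists f, P s' f.
  move=> s'; case: (classic (s' = ~~ s)) => [e|ne].
    subst s'; have [f Hf] := inf_large infA N; by exists f => _.
  case: (dom_inh A1 s') => d; exists (fun _ => d) => e; by case: ne.
have [F HF] := sort_choice Hex.
pose v' : valuation A1 := fun s' x => if (m <= x)%N then F s' (x - m) else v1 s' x.
have Ev : forall s' x, In (s',x) (vars phi1) -> v' s' x = v1 s' x.
  by move=> s' x h; rewrite /v' leqNgt (Hm _ _ h).
have sv' : sat v' psi.
  split.
  - apply: (proj1 (@qf_transfer _ A1 A1 phi1 (vars phi1) v1 v' qf (@free_vars _ phi1) _)) sv1.
    by move=> s' x y hx hy; rewrite (Ev _ _ hx) (Ev _ _ hy).
  - apply/sat_conj_of/sat_D => i j hi hj.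
    have hmi : (m <= i)%N by lia.
    have hmj : (m <= j)%N by lia.
    rewrite /v' hmi hmj => e.
    have := HF (~~ s) erefl (i - m) (j - m) ltac:(lia) ltac:(lia) e; lia.
have Tsat : T_satisfiable Ax psi by exists A1; split => //; exists v'.
have qpsi : qfree psi.
  split => //; apply: conj_of_qfree => p; exact: D_lits.
have [B [mB [[w [sw1 sw2]] finB]]] := fmp psi qpsi Tsat.
move/sat_conj_of/sat_D: sw2 => sw2.
have LBo : large B (~~ s) N.
  exists (fun i => w (~~ s) (i + m)) => i j hi hj e.
  have := sw2 (i + m) (j + m) ltac:(lia) ltac:(lia) e; lia.
case: (classic (large B s 2)) => [h2|n2]; first by exists B.
exfalso; apply: noB; exists B; split => //; split; first by exists w.
have alleq : forall x y : dom B s, x = y.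
  move=> x y; apply: NNPP => nxy; apply: n2.
  exists (fun i => if i == 0 then x else y) => i j hi hj.
  case: (eqVneq i 0) => [ei|ni]; case: (eqVneq j 0) => [ej|nj] /=.
  - by rewrite ei ej.
  - by move=> e; case: nxy.
  - by move=> e; case: nxy.
  - move=> _; move/eqP: ni; move/eqP: nj; lia.
move=> s'; case: (eqVneq s' s) => [e|ns].
  subst s'; split; first exact: finB.
  case: (dom_inh A1 s) => c; exists (fun _ => c) => x y _; exact: alleq.
have e := bool_other ns; subst s'.
split; first exact: finB.
exact: fin_inf_inj (finB _) infA.
Qed.

Lemma grow (Ax : form bool -> Prop) s phi1 A1 (v1 : valuation A1) :
  qfree phi1 -> is_model Ax A1 -> sat v1 phi1 -> finite_type (dom A1 s) ->
  ~ finite_type (dom A1 (~~ s)) -> finite_model_property Ax -> convex Ax ->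
  ~ (exists B, is_model Ax B /\ (exists w : valuation B, sat w phi1) /\
      forall s, finite_type (dom B s) /\
        exists f : dom B s -> dom A1 s, forall x y, f x = f y -> x = y) ->
  forall N k, exists C, is_model Ax C /\ large C (~~ s) N /\ large C s k.
Proof.
move=> qf mA1 sv1 finA infA fmp cv noB N k.
elim: k => [|k IH].
  have [C [mC [h1 h2]]] := base2 qf mA1 sv1 finA infA fmp noB N.
  exists C; split => //; split => //; exact: largeT_le h2 _.
case: (leqP k.+1 2) => [le|lt].
  have [C [mC [h1 h2]]] := base2 qf mA1 sv1 finA infA fmp noB N.
  exists C; split => //; split => //; exact: largeT_le h2 le.
apply: conv_step => //; lia.
Qed.

Lemma bool_case (Ax : form bool -> Prop) : bad_theory Ax -> False.
Proof.
move=> [Hc [nSI [nSF [cv fmp]]]].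
apply: nSF => phi1 qf A1 mA1 v1 sv1; apply: NNPP => noB.
apply: (final Hc nSI).
have side : forall s, finite_type (dom A1 s) -> ~ finite_type (dom A1 (~~ s)) ->
   forall N, exists C, is_model Ax C /\ forall s', large C s' N.
  move=> s fs inf N.
  have [C [mC [Co Cs]]] := grow qf mA1 sv1 fs inf fmp cv noB N N.
  exists C; split => // s'; case: (eqVneq s' s) => [->|ns]; first done.
  by rewrite (bool_other ns).
case: (classic (finite_type (dom A1 true))) => [ft|it];
case: (classic (finite_type (dom A1 false))) => [ff|iff].
- exfalso; apply: noB; exists A1; split => //; split; first by exists v1.
  by case; split => //; exists (fun x => x).
- exact: side true ft iff.
- exact: side false ff it.
- move=> N; exists A1; split => //; case; exact: inf_large.
Qed.

End Bool.

Lemma unit_case (Ax : form unit -> Prop) : bad_theory Ax -> False.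
Proof.
move=> [Hc [nSI [nSF _]]].
apply: nSF => phi1 qf A1 mA1 v1 sv1; apply: NNPP => noB.
apply: (final Hc nSI).
case: (classic (finite_type (dom A1 tt))) => [ft|it].
- exfalso; apply: noB; exists A1; split => //; split; first by exists v1.
  by case; split => //; exists (fun x => x).
- move=> N; exists A1; split => //; case; exact: inf_large.
Qed.

Theorem theorem7 :
  (~ exists Ax : form unit -> Prop, bad_theory Ax) /\
  (~ exists Ax : form bool -> Prop, bad_theory Ax).
Proof.
split => [[Ax H]|[Ax H]]; [exact: unit_case H|exact: bool_case H].
Qed.
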